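(* Let $\mathcal{C}$ be a covering of a finite set $E$ and $SH(X)=\bigcup\{K\in\mathcal{C}:K\cap X\neq\emptyset\}$ for $X\subseteq E$. Then $SH(SH(X))=SH(X)$ for all $X\subseteq E$ if and only if $\{I(x):x\in E\}$ forms a partition of $E$, where $I(x)=\bigcup\{K\in\mathcal{C}:x\in K\}$.
   Context: A covering of $E$ is a family of nonempty subsets of $E$ with union $E$. ''$\{I(x):x\in E\}$ forms a partition'' means the distinct sets among the $I(x)$ are pairwise disjoint (their union is $E$ since $x\in I(x)$). *)

(* Defs.v *)
From mathcomp Require Import all_boot.
Set Implicit Arguments. Unset Strict Implicit. Unset Printing Implicit Defensive.

Definition covering (T : finType) (C : {set {set T}}) (E : {set T}) : Prop :=
  (forall K, K \in C -> K != set0 /\ K \subset E) /\ cover C = E.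

Definition SH (T : finType) (C : {set {set T}}) (X : {set T}) : {set T} :=
  \bigcup_(K in C | K :&: X != set0) K.

Definition Iset (T : finType) (C : {set {set T}}) (x : T) : {set T} :=
  \bigcup_(K in C | x \in K) K.

(* Main.v *)
Require Import Defs.
From mathcomp Require Import all_boot.

Lemma memI (T : finType) (C : {set {set T}}) x w :
  reflect (exists2 K, K \in C & (x \in K) && (w \in K)) (w \in Iset C x).
Proof.
apply: (iffP bigcupP) => [[K /andP[KC xK] wK]|[K KC /andP[xK wK]]];
  exists K => //; by rewrite ?KC ?xK ?wK.
Qed.

Lemma memSH (T : finType) (C : {set {set T}}) (X : {set T}) w :
  reflect (exists2 K, K \in C & (w \in K) && [exists u, (u \in K) && (u \in X)])
    (w \in SH C X).
Proof.
apply: (iffP bigcupP) => [[K /andP[KC /set0Pn[u uKX]] wK]|[K KC /andP[wK /existsP[u /andP[uK uX]]]]].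
  move/setIP: uKX => [uK uX]; exists K => //; rewrite wK /=; apply/existsP; exists u; by rewrite uK.
exists K => //; rewrite KC /=; apply/set0Pn; exists u; exact/setIP.
Qed.

Theorem proposition10 (T : finType) (E : {set T}) (C : {set {set T}}) :
  covering C E ->
  ((forall X : {set T}, X \subset E -> SH C (SH C X) = SH C X) <->
   partition [set Iset C x | x in E] E).
Proof.
move=> [HK Hcov].
have inE_cov : forall x, x \in E -> exists2 K, K \in C & x \in K.
  by move=> x; rewrite -Hcov => /bigcupP[K KC xK]; exists K.
have IsubE : forall x, Iset C x \subset E.
  by move=> x; apply/subsetP => w /memI[K KC /andP[_ wK]]; have [_ /subsetP] := HK K KC; apply.
have selfI : forall x, x \in E -> x \in Iset C x.
  by move=> x /inE_cov[K KC xK]; apply/memI; exists K; rewrite ?xK.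
have symI : forall x w, w \in Iset C x -> x \in Iset C w.
  by move=> x w /memI[K KC /andP[a b]]; apply/memI; exists K; rewrite ?a ?b.
have Ppart : trivIset [set Iset C x | x in E] -> partition [set Iset C x | x in E] E.
  move=> Ht; rewrite /partition Ht /=; apply/andP; split.
    rewrite eqEsubset; apply/andP; split.
      apply/subsetP => w /bigcupP[A /imsetP[x _ ->]]; exact: (subsetP (IsubE x)).
    apply/subsetP => w wE; apply/bigcupP; exists (Iset C w); first exact: imset_f.
    exact: selfI.
  apply/imsetP => [[x xE /esym /setP/(_ x)]]; by rewrite inE selfI.
split.
- move=> H; apply: Ppart.
  have SHI : forall x, x \in E -> SH C (Iset C x) = Iset C x.
    move=> x xE; have := H [set x]; rewrite sub1set xE => /(_ isT).
    have -> : SH C [set x] = Iset C x.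
      apply/setP => w; apply/memSH/memI => [[K KC /andP[wK /existsP[u]]]|[K KC /andP[xK wK]]].
        move=> /andP[uK]; rewrite inE => /eqP ux; exists K => //; by rewrite -ux uK wK.
      exists K => //; rewrite wK /=; apply/existsP; exists x; by rewrite xK inE eqxx.
    by [].
  have sub : forall v w, v \in E -> w \in Iset C v -> Iset C w \subset Iset C v.
    move=> v w vE wI; rewrite -(SHI v vE); apply/subsetP => z /memI[K KC /andP[wK zK]].
    by apply/memSH; exists K; rewrite // zK; apply/existsP; exists w; rewrite wK.
  have eqI : forall v w, v \in E -> w \in Iset C v -> Iset C w = Iset C v.
    move=> v w vE wI; apply/eqP; rewrite eqEsubset sub //=.
    apply: sub (symI _ _ wI); exact: (subsetP (IsubE v)).
  apply/trivIsetP => A B /imsetP[x xE ->] /imsetP[y yE ->] neq.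
  apply/pred0P => z /=; apply/negbTE/negP => /andP[zx zy].
  by move/eqP: neq; rewrite -(eqI x z) // -(eqI y z).
- move=> /and3P[_ Ht _] X XE.
  have eqI : forall u v, u \in E -> v \in E -> v \in Iset C u -> Iset C u = Iset C v.
    move=> u v uE vE vI; apply/eqP; apply: contraT => neq.
    have := trivIsetP Ht _ _ (imset_f (Iset C) uE) (imset_f (Iset C) vE) neq.
    by move/pred0P/(_ v) => /=; rewrite vI selfI.
  have SHsub : forall Y : {set T}, Y \subset E -> SH C Y \subset E.
    move=> Y _; apply/subsetP => w /memSH[K KC /andP[wK _]].
    by have [_ /subsetP] := HK K KC; apply.
  apply/eqP; rewrite eqEsubset; apply/andP; split; last first.
    apply/subsetP => w wS; apply/memSH.
    have [K KC wK] := inE_cov w (subsetP (SHsub X XE) w wS).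
    by exists K; rewrite // wK; apply/existsP; exists w; rewrite wK.
  apply/subsetP => w /memSH[K KC /andP[wK /existsP[v /andP[vK vS]]]].
  move: (vS) => /memSH[K' K'C /andP[vK' /existsP[u /andP[uK' uX]]]].
  have uE := subsetP XE u uX.
  have vE := subsetP (SHsub X XE) v vS.
  have vIu : v \in Iset C u by apply/memI; exists K'; rewrite ?uK' ?vK'.
  have wIv : w \in Iset C v by apply/memI; exists K; rewrite ?vK ?wK.
  move: wIv; rewrite -(eqI u v uE vE vIu) => /memI[K'' K''C /andP[uK'' wK'']].
  by apply/memSH; exists K''; rewrite // wK''; apply/existsP; exists u; rewrite uK''.
Qed.
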